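(* Let $r\geq 3$ and let $D$ be an $m$-colored semicomplete $r$-partite digraph such that every directed $3$-cycle $\overrightarrow{C}_3$ and every directed $4$-cycle $\overrightarrow{C}_4$ contained in $D$ (as a subdigraph) is monochromatic. Let $x,y$ be distinct vertices of $D$. If there exists a directed path from $x$ to $y$ using exactly $2$ colors and there is no directed path from $y$ to $x$ using at most $2$ colors, then $d(x,y)\leq 2$.
   Context: A semicomplete $r$-partite digraph ($r\ge 2$) is a digraph whose vertex set is partitioned into $r$ nonempty independent sets (partite sets) such that for any two vertices $u,v$ in different partite sets at least one of the arcs $(u,v)$, $(v,u)$ is present (both may be present); there are no arcs inside a partite set. An $m$-colored digraph is a digraph whose arcs are each assigned one of $m$ colors. A directed path (no repeated vertices) is $j$-colored if its arcs use exactly $j$ distinct colors; it uses at most $k$ colors if it is $j$-colored for some $1\le j\le k$. A subdigraph is monochromatic if all its arcs have the same color. $\overrightarrow{C}_n$ is the directed cycle of length $n$. $d(x,y)$ denotes the minimum number of arcs of a directed path from $x$ to $y$. *)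

(* Defs.v *)
From mathcomp Require Import all_boot.
Set Implicit Arguments. Unset Strict Implicit. Unset Printing Implicit Defensive.

Definition semicomplete_multipartite (V : finType) (r : nat)
  (arc : rel V) (part : V -> 'I_r) : Prop :=
  [/\ (forall i : 'I_r, exists v : V, part v = i),
      (forall u v, arc u v -> part u != part v) &
      (forall u v, part u != part v -> arc u v || arc v u)].

(* An m-coloring: each arc (u,v) gets color [col u v] in {0,...,m-1}
   (values of col on non-arcs are irrelevant). *)
Definition m_colored (V : finType) (m : nat) (arc : rel V) (col : V -> V -> nat) : Prop :=
  forall u v, arc u v -> col u v < m.

Definition dipath (V : finType) (arc : rel V) (x : V) (p : seq V) (y : V) : Prop :=
  [/\ path arc x p, uniq (x :: p) & last x p = y].

Definition ncolors (V : finType) (col : V -> V -> nat) (x : V) (p : seq V) : nat :=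
  size (undup (pairmap col x p)).

Definition C3_mono (V : finType) (arc : rel V) (col : V -> V -> nat) : Prop :=
  forall a b c : V, uniq [:: a; b; c] ->
    arc a b -> arc b c -> arc c a ->
    col a b = col b c /\ col b c = col c a.

Definition C4_mono (V : finType) (arc : rel V) (col : V -> V -> nat) : Prop :=
  forall a b c d : V, uniq [:: a; b; c; d] ->
    arc a b -> arc b c -> arc c d -> arc d a ->
    [/\ col a b = col b c, col b c = col c d & col c d = col d a].

Definition dist_le (V : finType) (arc : rel V) (x y : V) (k : nat) : Prop :=
  exists p : seq V, dipath arc x p y /\ size p <= k.

(* Main.v *)
Require Import Defs.
From Stdlib Require Import Classical.
From mathcomp Require Import all_boot.

Ltac neqs := rewrite /= ?inE ?negb_or; repeat (apply/andP; split); try done; try (by rewrite eq_sym).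

Theorem mainTheorem4 (V : finType) (r m : nat) (arc : rel V) (part : V -> 'I_r)
  (col : V -> V -> nat) :
  3 <= r ->
  semicomplete_multipartite arc part ->
  m_colored m arc col ->
  C3_mono arc col ->
  C4_mono arc col ->
  forall x y : V, x != y ->
  (exists p : seq V, dipath arc x p y /\ ncolors col x p = 2) ->
  ~ (exists q : seq V, dipath arc y q x /\ 1 <= ncolors col y q <= 2) ->
  dist_le arc x y 2.
Proof.
move=> _ [_ Hin Hbt] _ C3 C4 x y xy [p [Pp _]] Hno.
case: (classic (dist_le arc x y 2)) => // Hnd; exfalso.
have irr : forall u, ~~ arc u u.
  by move=> u; apply/negP => /Hin; rewrite eqxx.
have neqa : forall u v, arc u v -> u != v.
  by move=> u v H; apply/eqP => E; subst; move: (irr v); rewrite H.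
have nxy : ~~ arc x y.
  apply/negP => H; apply: Hnd; exists [:: y]; split => //.
  by split; rewrite /= ?H // inE xy.
have n2 : forall z, ~~ (arc x z && arc z y).
  move=> z; apply/negP => /andP[H1 H2]; apply: Hnd; exists [:: z; y]; split => //.
  split; rewrite /= ?H1 ?H2 // !inE negb_or xy (neqa _ _ H1) (neqa _ _ H2) //.
have nyx : ~~ arc y x.
  apply/negP => H; apply: Hno; exists [:: x]; split => //.
  by split; rewrite /= ?H // inE eq_sym xy.
have nyzx : forall z, ~~ (arc y z && arc z x).
  move=> z; apply/negP => /andP[H1 H2]; apply: Hno; exists [:: z; x]; split.
    split; rewrite /= ?H1 ?H2 // !inE negb_or (eq_sym y x) xy (neqa _ _ H1) (neqa _ _ H2) //.
  by rewrite /ncolors /= inE; case: eqP.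
have pxy : part x = part y.
  case: (eqVneq (part x) (part y)) => // /Hbt /orP[H|H].
    by move: nxy; rewrite H.
  by move: nyx; rewrite H.
have cls : forall z, part z != part x ->
    (arc x z && arc y z) || (arc z x && arc z y).
  move=> z Hz.
  have h1 : arc x z || arc z x by apply: Hbt; rewrite eq_sym.
  have h2 : arc y z || arc z y.
    by apply: Hbt; rewrite -pxy eq_sym.
  move: (n2 z) (nyzx z) h1 h2.
  by case: (arc x z); case: (arc z x); case: (arc y z); case: (arc z y).
have tri : forall u v, arc x u -> arc y u -> arc u v -> arc v x -> arc v y -> False.
  move=> u v Hxu Hyu Huv Hvx Hvy.
  have ux := neqa _ _ Hxu; have uy := neqa _ _ Hyu; have uv := neqa _ _ Huv.
  have vx := neqa _ _ Hvx; have vy := neqa _ _ Hvy.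
  have [E1 E2] : col y u = col u v /\ col u v = col v y.
    by apply: C3 => //; neqs.
  have [E3 E4] : col x u = col u v /\ col u v = col v x.
    by apply: C3 => //; neqs.
  apply: Hno; exists [:: u; v; x]; split.
    split; rewrite /= ?Hyu ?Huv ?Hvx //.
    neqs.
  by rewrite /ncolors /= E1 -E4 !inE eqxx.
have quad : forall u v w, arc x u -> arc y u -> arc u v -> v != x -> v != y ->
    arc v w -> arc w x -> arc w y -> False.
  move=> u v w Hxu Hyu Huv vx vy Hvw Hwx Hwy.
  have ux := neqa _ _ Hxu; have uy := neqa _ _ Hyu; have uv := neqa _ _ Huv.
  have vw := neqa _ _ Hvw; have wx := neqa _ _ Hwx; have wy := neqa _ _ Hwy.
  have uw : u != w.
    by apply/eqP => E; subst; move: (n2 w); rewrite Hxu Hwy.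
  have [E1 E2 E3] : [/\ col y u = col u v, col u v = col v w & col v w = col w y].
    by apply: C4 => //; neqs.
  have [F1 F2 F3] : [/\ col x u = col u v, col u v = col v w & col v w = col w x].
    by apply: C4 => //; neqs.
  apply: Hno; exists [:: u; v; w; x]; split.
    split; rewrite /= ?Hyu ?Huv ?Hvw ?Hwx //.
    neqs.
  by rewrite /ncolors /= E1 -F3 -E2 !inE eqxx.
have key : forall n s u, size s <= n -> arc x u -> arc y u -> path arc u s ->
    last u s = y -> False.
  elim=> [|n IH] [|v s] u //=.
  - by move=> _ _ H _ E; subst; move: (irr y); rewrite H.
  - by move=> _ _ H _ E; subst; move: (irr y); rewrite H.
  move=> Hs Hxu Hyu /andP[Huv Hp] Hl.
  case: (eqVneq (part v) (part x)) => Hv.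
    case: (eqVneq v x) => vx.
      by rewrite vx in Huv; move: (nyzx u); rewrite Hyu Huv.
    case: (eqVneq v y) => vy.
      by rewrite vy in Huv; move: (n2 u); rewrite Hxu Huv.
    move: Hs Hp Hl; case: s => [|w s] /=.
      by move=> _ _ E; move: vy; rewrite E eqxx.
    move=> Hs /andP[Hvw Hp] Hl.
    have Hw : part w != part x by rewrite -Hv eq_sym; apply: Hin.
    case/orP: (cls w Hw) => /andP[H1 H2].
      by apply: (IH s w) => //; apply: ltnW.
    exact: (quad u v w).
  case/orP: (cls v Hv) => /andP[H1 H2].
    exact: (IH s v).
  exact: (tri u v).
have Hx1 : exists v s, arc x v && path arc v s /\ last v s = y.
  case: p Pp => [|v s] [Pp _ Pl] //=.
    by move: xy; rewrite -Pl /= eqxx.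
  by exists v, s.
case: Hx1 => v [s [/andP[Hxv Hp] Hl]].
have Hv : part v != part x by rewrite eq_sym; apply: Hin.
case/orP: (cls v Hv) => /andP[H1 H2].
  exact: (key (size s) s v).
by move: (n2 v); rewrite Hxv H2.
Qed.
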